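(* Let $G$ be a compact subgroup of $\operatorname{O}(3)$. Let $L_i$ ($i\ge1$) and $L$ be $n$-component links in $\mathbb{R}^3$, each given by a locally constant-speed parametrization $S^1\sqcup\cdots\sqcup S^1\to\mathbb{R}^3$ of the disjoint union of $n$ unit circles, and suppose $L_i\to L$ in the $C^1$ metric. If each $L_i$ is $G$-invariant, then $L$ is $G$-invariant; if each $L_i$ is oriented $G$-invariant, then $L$ is oriented $G$-invariant.
   Context: $G\subset\operatorname{O}(3)$ acts linearly on $\mathbb{R}^3$. A link $L$ is $G$-invariant if $g(\operatorname{Image}L)=\operatorname{Image}L$ for all $g\in G$. Equivalently (since isometries preserve speed), for each $g\in G$ there is $\hat g$ in the isometry group $\operatorname{O}(2)^n\rtimes S_n$ of $S^1\sqcup\cdots\sqcup S^1$ (acting by $(\gamma_1,\dots,\gamma_n,p)(\phi,i)=(\gamma_i(\phi),p(i))$) with $g\circ L=L\circ\hat g$. $L$ is oriented $G$-invariant if for every $g\in G$ such a $\hat g$ can be taken in $\operatorname{SO}(2)^n\rtimes S_n$, i.e. $g$ maps each component orientation-preservingly onto a component. *)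

(* Defs.v *)
From HB Require Import structures.
From mathcomp Require Import all_boot all_order all_algebra all_fingroup.
From mathcomp Require Import all_classical all_reals all_analysis.
Set Implicit Arguments. Unset Strict Implicit. Unset Printing Implicit Defensive.
Import Order.TTheory GRing.Theory Num.Theory.
Import numFieldNormedType.Exports.
Local Open Scope classical_set_scope.
Local Open Scope ring_scope.

Section Defs.
Variable R : realType.

Definition enorm (v : 'cV[R]_3) : R := Num.sqrt (\sum_(j < 3) (v j ord0) ^+ 2).

(* A (parametrized) n-component link: component i, angle phi (the unit circle
   S^1 = R / 2piZ, parametrized by arc length phi). *)
Definition paramlink (n : nat) := 'I_n -> R -> 'cV[R]_3.

Definition vel (f : R -> 'cV[R]_3) (t : R) : 'cV[R]_3 :=
  \col_(j < 3) derive1 (fun s => f s j ord0) t.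

Definition C1_curve (f : R -> 'cV[R]_3) : Prop :=
  forall j : 'I_3, (forall t, derivable (fun s => f s j ord0) t 1) /\
     continuous (derive1 (fun s => f s j ord0)).

Definition is_link (n : nat) (L : paramlink n) : Prop :=
  [/\ forall i t, L i (t + 2 * pi) = L i t,
      forall i, C1_curve (L i),
      forall i j s t, L i s = L j t -> i = j /\ exists k : int, t = s + k%:~R * (2 * pi)
    & forall i, exists c : R, forall t, enorm (vel (L i) t) = c].

Definition C1_converges (n : nat) (Ls : nat -> paramlink n) (L : paramlink n) : Prop :=
  forall e : R, 0 < e -> exists N : nat, forall k, (N <= k)%N ->
    forall i t, enorm (Ls k i t - L i t) + enorm (vel (Ls k i) t - vel (L i) t) <= e.

Definition orth3 (g : 'M[R]_3) : Prop := g^T *m g = 1%:M.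

Definition compact_subgroup_O3 (G : set 'M[R]_3) : Prop :=
  [/\ G `<=` orth3, G 1%:M,
      forall g h, G g -> G h -> G (g *m h),
      forall g, G g -> G (invmx g)
    & compact G].

Definition link_image (n : nat) (L : paramlink n) : set 'cV[R]_3 :=
  [set x | exists i t, x = L i t].

Definition G_invariant (G : set 'M[R]_3) (n : nat) (L : paramlink n) : Prop :=
  forall g, G g -> (fun x => g *m x) @` link_image L = link_image L.

(* oriented G-invariant: for each g in G there is hat g in SO(2)^n x| S_n,
   (theta_1..theta_n, p)(phi, i) = (phi + theta_i, p i), with g o L = L o hat g *)
Definition oriented_G_invariant (G : set 'M[R]_3) (n : nat) (L : paramlink n) : Prop :=
  forall g, G g -> exists (p : {perm 'I_n}) (theta : 'I_n -> R),
    forall i t, g *m L i t = L (p i) (t + theta i).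

End Defs.

(* Main.v *)
Require Import Defs.
From HB Require Import structures.
From mathcomp Require Import all_boot all_order all_algebra all_fingroup.
From mathcomp Require Import all_classical all_reals all_analysis.
From mathcomp Require Import lra ring.
Import Order.TTheory GRing.Theory Num.Theory.
Import numFieldNormedType.Exports.
Local Open Scope classical_set_scope.
Local Open Scope ring_scope.
Lemma cont_eps (R : realType) (f : R -> R) (c : R) :
  derivable f c 1 -> forall e : R, 0 < e -> exists2 d : R, 0 < d &
    forall t, `|c - t| < d -> `|f c - f t| < e.
Proof.
move=> hd e he.
have cf : {for c, continuous f}.
  by apply: differentiable_continuous; apply/derivable1_diffP.
move/cvgrPdist_lt: cf => /(_ e he) /nbhs_ballP [d d0 hd'].
exists d => // t ht; apply: hd'.
Qed.

Lemma single_le_sum (R : realType) (F : 'I_3 -> R) (i : 'I_3) :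
  (forall j, 0 <= F j) -> F i <= \sum_(j < 3) F j.
Proof.
move=> h; rewrite (bigD1 i) //= lerDl; apply: sumr_ge0 => j _; exact: h.
Qed.

Lemma coord_le_enorm (R : realType) (v : 'cV[R]_3) m :
  `|v m ord0| <= enorm v.
Proof.
rewrite /enorm -sqrtr_sqr ler_sqrt; last by apply: sumr_ge0 => j _; exact: sqr_ge0.
rewrite (bigD1 m) //= lerDl; apply: sumr_ge0 => j _; exact: sqr_ge0.
Qed.

Lemma enorm_ge0 (R : realType) (v : 'cV[R]_3) : 0 <= enorm v.
Proof. exact: sqrtr_ge0. Qed.

Lemma periodic_int (R : realType) (V : Type) (f : R -> V) (a : R) :
  (forall x, f (x + a) = f x) -> forall (z : int) x, f (x + z%:~R * a) = f x.
Proof.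
move=> h; have hn : forall (n : nat) x, f (x + n%:R * a) = f x.
  elim=> [|n IH] x; first by rewrite mul0r addr0.
  by rewrite -natr1 mulrDl mul1r addrA h IH.
case=> [n|n] x; first exact: hn.
rewrite NegzE mulrNz mulNr -[in RHS](subrK (n.+1%:R * a) x) -(hn n.+1 (x - _)).
done.
Qed.

Lemma reduce (R : realType) (V : Type) (f : R -> V) (a : R) : 0 < a ->
  (forall x, f (x + a) = f x) -> forall s, exists s', [/\ 0 <= s', s' <= a &
     forall x, f (x + s) = f (x + s')].
Proof.
move=> a0 h s.
set z := Num.floor (s / a).
exists (s - z%:~R * a); split.
- rewrite subr_ge0 -ler_pdivlMr //; exact: floor_le.
- rewrite lerBlDl -[X in _ <= _ + X]mul1r -mulrDl -ler_pdivrMr //.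
  have := floor_itv (s / a) => /andP[_ /ltW]; by rewrite intrD.
- move=> x; rewrite -(periodic_int _ _ _ _ h z (x + (s - _))).
  by rewrite -addrA subrK.
Qed.

Lemma pigeon (T : finType) (p : nat -> T) :
  exists q, forall N, exists2 k, (N <= k)%N & p k = q.
Proof.
case: (pselect (exists q, forall N, exists2 k, (N <= k)%N & p k = q)) => // hn.
exfalso.
have : forall q, exists N, forall k, (N <= k)%N -> p k <> q.
  move=> q; apply: contrapT => hq; apply: hn; exists q => N.
  apply: contrapT => hk; apply: hq; exists N => k hk' e; apply: hk; by exists k.
move=> /choice [Nf hNf].
set M := (\max_q Nf q)%N.
by apply: (hNf (p M) M) => //; rewrite /M; apply: leq_bigmax.
Qed.

Lemma cluster (R : realType) (S : nat -> Prop) (a : nat -> R) (M : R) :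
 (forall N, exists2 k, (N <= k)%N & S k) -> (forall k, 0 <= a k <= M) ->
 exists c, forall e, 0 < e -> forall N, exists k, [/\ (N <= k)%N, S k & `|a k - c| < e].
Proof.
move=> hS ha.
pose T := [set x : R | forall N, exists k, [/\ (N<=k)%N, S k & x <= a k]].
have hT : has_sup T.
  split.
    exists 0 => N; case: (hS N) => k hk sk; exists k; split => //; by case/andP: (ha k).
  exists M => x Tx; case: (Tx 0%N) => k [_ _ xk]; apply: le_trans xk _; by case/andP: (ha k).
exists (sup T) => e e0 N.
have e20 : 0 < e/2 by rewrite divr_gt0.
have [x Tx xlt] := sup_adherent e20 hT.
have [N0 hN0] : exists N0, forall k, (N0 <= k)%N -> S k -> a k < sup T + e/2.
  apply: contrapT => hn.
  have : T (sup T + e/2).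
    move=> N1; apply: contrapT => hk; apply: hn; exists N1 => k hk1 sk.
    rewrite ltNge; apply/negP => hle; apply: hk; by exists k.
  move/(sup_upper_bound hT) => /=; lra.
case: (Tx (maxn N N0)) => k [hk sk xk].
have hak := hN0 k (leq_trans (leq_maxr _ _) hk) sk.
exists k; split => //.
  exact: leq_trans (leq_maxl _ _) hk.
rewrite ltr_norml; apply/andP; split; lra.
Qed.
Lemma approx (R : realType) n (Ls : nat -> paramlink R n) (L : paramlink R n)
  (j : 'I_n) (s : nat -> R) (c : R) (S : nat -> Prop) (y : 'cV[R]_3) :
 (forall e, 0 < e -> exists N, forall k, (N <= k)%N -> S k ->
     forall m, `|y m ord0 - Ls k j (s k) m ord0| <= e) ->
 (forall e, 0 < e -> exists N, forall k, (N <= k)%N ->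
     forall i t m, `|Ls k i t m ord0 - L i t m ord0| <= e) ->
 (forall m, derivable (fun t => L j t m ord0) c 1) ->
 (forall e, 0 < e -> forall N, exists k, [/\ (N <= k)%N, S k & `|s k - c| < e]) ->
 y = L j c.
Proof.
move=> H1 H2 Hd H3; apply/matrixP => m l; rewrite (ord1 l) {l}.
apply/eqP; rewrite -subr_eq0 -normr_le0; apply/ler_addgt0Pr => e e0.
rewrite add0r.
have e3 : 0 < e / 3 by rewrite divr_gt0.
have [N1 hN1] := H1 _ e3.
have [N2 hN2] := H2 _ e3.
have [d d0 hd] := cont_eps _ _ _ (Hd m) _ e3.
have [k [hk Sk hsk]] := H3 _ d0 (maxn N1 N2).
have a1 := hN1 k (leq_trans (leq_maxl _ _) hk) Sk m.
have a2 := hN2 k (leq_trans (leq_maxr _ _) hk) j (s k) m.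
have a3 := hd (s k); rewrite distrC in a3; have {}a3 := a3 hsk.
have t1 := ler_distD (Ls k j (s k) m ord0) (y m ord0) (L j c m ord0).
have t2 := ler_distD (L j (s k) m ord0) (Ls k j (s k) m ord0) (L j c m ord0).
rewrite distrC in a3.
lra.
Qed.

Lemma gbound (R : realType) (g : 'M[R]_3) :
  exists K : R, 0 < K /\ forall v m, `|(g *m v) m ord0| <= K * enorm v.
Proof.
exists (1 + \sum_(m < 3) \sum_(l < 3) `|g m l|); split.
  by apply: ltr_wpDr => //; apply: sumr_ge0 => ? _; apply: sumr_ge0 => ? _.
move=> v m; rewrite mxE.
apply: le_trans (ler_norm_sum _ _ _) _.
apply: (@le_trans _ _ (\sum_(l < 3) `|g m l| * enorm v)).
  apply: ler_sum => l _; rewrite normrM; apply: ler_wpM2l => //.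
  exact: coord_le_enorm.
rewrite -mulr_suml; apply: ler_wpM2r; first exact: enorm_ge0.
apply: (@le_trans _ _ (\sum_(m < 3) \sum_(l < 3) `|g m l|)); last by rewrite lerDr.
apply: (@single_le_sum _ (fun m => \sum_(l < 3) `|g m l|)) => j.
by apply: sumr_ge0.
Qed.

Arguments approx [R n Ls L].
Arguments cluster [R].
Arguments gbound [R].
Arguments reduce [R V].
Lemma conv_enorm (R : realType) n (Ls : nat -> paramlink R n) (L : paramlink R n) :
  C1_converges Ls L ->
  forall e, 0 < e -> exists N, forall k, (N <= k)%N ->
     forall i t, enorm (Ls k i t - L i t) <= e.
Proof.
move=> hc e e0; have [N hN] := hc e e0; exists N => k hk.
move=> i t; have := hN k hk i t; have := enorm_ge0 _ (vel (Ls k i) t - vel (L i) t).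
move=> h1 h2; lra.
Qed.

Arguments conv_enorm [R n Ls L].
Lemma conv_coord (R : realType) n (Ls : nat -> paramlink R n) (L : paramlink R n) :
  C1_converges Ls L ->
  forall e, 0 < e -> exists N, forall k, (N <= k)%N ->
     forall i t m, `|Ls k i t m ord0 - L i t m ord0| <= e.
Proof.
move=> hc e e0; have [N hN] := conv_enorm hc _ e0; exists N => k hk i t m.
apply: le_trans (hN k hk i t).
have := coord_le_enorm _ (Ls k i t - L i t) m; by rewrite !mxE.
Qed.
Arguments conv_coord [R n Ls L].

Lemma H1of (R : realType) n (Ls : nat -> paramlink R n) (L : paramlink R n)
    (g : 'M[R]_3) i t (S : nat -> Prop) (s : nat -> R) q :
    C1_converges Ls L ->
    (forall k, S k -> Ls k q (s k) = g *m Ls k i t) ->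
    forall e, 0 < e -> exists N, forall k, (N <= k)%N -> S k ->
     forall m, `|(g *m L i t) m ord0 - Ls k q (s k) m ord0| <= e.
Proof.
move=> hconv hs e e0.
have [K [K0 hK]] := gbound g.
have [N hN] := conv_enorm hconv _ (divr_gt0 e0 K0).
exists N => k hk Sk m.
rewrite hs // distrC.
have -> : (g *m Ls k i t) m ord0 - (g *m L i t) m ord0 =
   (g *m (Ls k i t - L i t)) m ord0 by rewrite mulmxBr !mxE.
apply: le_trans (hK _ m) _.
rewrite -ler_pdivlMl // mulrC; exact: hN.
Qed.
Arguments H1of [R n Ls L].

Theorem lemma3p3 (R : realType) (G : set 'M[R]_3) (n : nat)
    (Ls : nat -> paramlink R n) (L : paramlink R n) :
  compact_subgroup_O3 G ->
  (forall k, is_link (Ls k)) -> is_link L ->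
  C1_converges Ls L ->
  ((forall k, G_invariant G (Ls k)) -> G_invariant G L) /\
  ((forall k, oriented_G_invariant G (Ls k)) -> oriented_G_invariant G L).
Proof.
move=> [GO G1 GM GV _] hLs [_ hC _ _] hconv.
have pi2 : 0 < 2 * pi :> R by rewrite mulr_gt0 // pi_gt0.
have per : forall k i x, Ls k i (x + 2 * pi) = Ls k i x.
  by move=> k i x; case: (hLs k) => + _ _ _; apply.
have der : forall j c m, derivable (fun t => L j t m ord0) c 1.
  by move=> j c m; case: (hC j m) => + _; apply.
split.
- move=> hGk.
  have fwd : forall g, G g -> forall i t, link_image L (g *m L i t).
    move=> g Gg i t.
    have : forall k, exists js : 'I_n * R, [/\ 0 <= js.2, js.2 <= 2 * pi &
        Ls k js.1 js.2 = g *m Ls k i t].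
      move=> k.
      have : link_image (Ls k) (g *m Ls k i t).
        rewrite -(hGk k g Gg); exists (Ls k i t) => //; by exists i, t.
      case=> j [s hs].
      have [s' [s0 s1 hs']] := reduce (Ls k j) _ pi2 (per k j) s.
      exists (j, s'); split => //=.
      by rewrite hs; have := hs' 0; rewrite !add0r.
    move=> /choice [js hjs].
    have [q hq] := pigeon _ (fun k => (js k).1).
    pose S k := (js k).1 = q.
    have [c hc] := cluster S (fun k => (js k).2) (2 * pi) hq
       (fun k => let: And3 a b _ := hjs k in introT andP (conj a b)).
    exists q, c.
    apply: (approx q (fun k => (js k).2) c S).
    + apply: (H1of g i t S _ q hconv).
      by move=> k Sk; case: (hjs k) => _ _ <-; rewrite /S in Sk; rewrite Sk.
    + exact: conv_coord hconv.
    + by move=> m; apply: der.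
    + exact: hc.
  move=> g Gg; apply/seteqP; split.
    by move=> _ [_ [i [t ->]] <-]; apply: fwd.
  move=> _ [i [t ->]].
  have gu : g \in unitmx by case: (mulmx1_unit (GO g Gg)).
  exists (invmx g *m L i t); first exact: fwd (GV g Gg) i t.
  by rewrite mulmxA mulmxV // mul1mx.
- move=> hOk g Gg.
  have : forall k, exists pth : {perm 'I_n} * ('I_n -> R),
      forall i t, g *m Ls k i t = Ls k (pth.1 i) (t + pth.2 i).
    move=> k; have [p [th h]] := hOk k g Gg; by exists (p, th).
  move=> /choice [pth hpth].
  have : forall ki : nat * 'I_n, exists th' : R, [/\ 0 <= th', th' <= 2 * pi &
      forall x, Ls ki.1 ((pth ki.1).1 ki.2) (x + (pth ki.1).2 ki.2)
              = Ls ki.1 ((pth ki.1).1 ki.2) (x + th')].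
    move=> [k i] /=.
    have [s' [s0 s1 hs']] := reduce (Ls k ((pth k).1 i)) _ pi2 (per k _) ((pth k).2 i).
    by exists s'.
  move=> /choice [th hth].
  have [q hq] := pigeon _ (fun k => (pth k).1).
  pose S k := (pth k).1 = q.
  have : forall i, exists c : R, forall e, 0 < e -> forall N, exists k,
      [/\ (N <= k)%N, S k & `|th (k, i) - c| < e].
    move=> i; apply: (cluster S (fun k => th (k, i)) (2 * pi) hq).
    by move=> k; case: (hth (k, i)) => a b _; apply/andP.
  move=> /choice [cf hcf].
  exists q, cf => i t.
  apply: (approx (q i) (fun k => t + th (k, i)) (t + cf i) S).
  + apply: (H1of g i t S _ (q i) hconv).
    move=> k Sk; rewrite hpth; case: (hth (k, i)) => _ _ /= ->.
    by rewrite /S in Sk; rewrite Sk.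
  + exact: conv_coord hconv.
  + by move=> m; apply: der.
  + move=> e e0 N; have [k [hk Sk hk']] := hcf i e e0 N.
    exists k; split => //.
    by have -> : t + th (k, i) - (t + cf i) = th (k, i) - cf i by ring.
Qed.
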